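(* Let $q=p^{m_0}$ with $p$ prime, let $L$ be a finite extension of $\mathbb{F}_q((1/\theta))$ with ring of integers $\mathcal O$, and let $\rho$ be a permutation of $\{0,1,2,\ldots\}$. For every nonnegative integer $j$, as functions from $\mathbb{Z}_p$ to $\mathcal O$ we have $$\binom{y}{j}^{\rho_1}=\binom{y}{\rho_\ast j},$$ i.e. $\binom{\rho_\ast^{-1}y}{j}=\binom{y}{\rho_\ast j}$ for all $y\in\mathbb{Z}_p$.
   Context: For $y\in\mathbb{Z}_p$ written $q$-adically as $y=\sum_{j\ge0}c_jq^j$ with $0\le c_j<q$, set $\rho_\ast y:=\sum_{j\ge0}c_jq^{\rho(j)}$; this is a bijection (indeed homeomorphism) of $\mathbb{Z}_p$ stabilizing the nonnegative integers, with inverse $(\rho^{-1})_\ast$. For $y\in\mathbb{Z}_p$ and a nonnegative integer $j$, $\binom{y}{j}\in\mathbb{Z}_p$ is the usual binomial coefficient, viewed in $\mathcal O$ via reduction modulo $p$ (as $\mathbb{F}_p\subset\mathcal O$). For a continuous $f:\mathbb{Z}_p\to\mathcal O$, define $f^{\rho_1}(y):=f(\rho_\ast^{-1}y)$. *)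

(* Defs.v *)
From HB Require Import structures.
From mathcomp Require Import all_boot all_algebra.
From Stdlib Require Import ClassicalEpsilon.
Set Implicit Arguments. Unset Strict Implicit. Unset Printing Implicit Defensive.
Import GRing.Theory.

(* An element y of Z_p is represented by its q-adic digit sequence
   y = \sum_j c_j q^j, 0 <= c_j < q  (q = p^m0); this is a bijection
   between Z_p and nat -> 'I_q. *)
Definition Zpq (q : nat) := nat -> 'I_q.

Definition trunc (q : nat) (y : Zpq q) (n : nat) : nat :=
  \sum_(k < n) (y k : nat) * q ^ k.

(* sigma_* y for a bijection sigma of nat with inverse sigma_inv:
   sigma_* (\sum c_j q^j) = \sum c_j q^(sigma j), i.e. the digit of
   sigma_* y at position k is c_(sigma_inv k). *)
Definition pushZp (q : nat) (sigma_inv : nat -> nat) (y : Zpq q) : Zpq q :=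
  fun k => y (sigma_inv k).

(* rho_* on nonnegative integers: j = \sum_k c_k q^k  |->  \sum_k c_k q^(rho k).
   (For q >= 2 all digits of j at positions k > j vanish.) *)
Definition push_nat (q : nat) (rho : nat -> nat) (j : nat) : nat :=
  \sum_(k < j.+1) ((j %/ q ^ k) %% q) * q ^ (rho k).

(* binom(y, j) reduced mod p, y in Z_p: the binomial y |-> binom(y,j) is the
   continuous extension from the nonnegative integers, and reduction mod p is
   continuous into the discrete F_p, so binom(y,j) mod p is the eventual value
   of 'C(y mod q^n, j) mod p as n -> oo. *)
Definition eventual_binom (p q : nat) (y : Zpq q) (j : nat) (v : 'F_p) : Prop :=
  exists N, forall n, (N <= n)%N -> (('C(trunc y n, j))%:R)%R = v.

Definition binomZp (p q : nat) (y : Zpq q) (j : nat) : 'F_p :=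
  epsilon (inhabits 0%R) (@eventual_binom p q y j).

(* Main.v *)
Require Import Defs.
From mathcomp Require Import all_boot all_algebra.
Import GRing.Theory.
Local Open Scope ring_scope.

Lemma coefXD1n (R : nzRingType) n k : ((('X + 1) ^+ n : {poly R})`_k) = ('C(n, k))%:R.
Proof.
rewrite exprD1n coef_sum.
have [kn|kn] := ltnP k n.+1.
  rewrite (bigD1 (Ordinal kn)) //= big1 ?addr0; first by rewrite coefMn coefXn eqxx.
  move=> i /eqP ne; rewrite coefMn coefXn.
  by case: eqP => [ik|]; [case: ne; apply: val_inj; rewrite /= ik|rewrite mul0rn].
rewrite bin_small // big1 // => i _; rewrite coefMn coefXn.
by case: eqP => [ik|]; [move: (ltn_ord i); rewrite -ik ltnNge kn | rewrite mul0rn].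
Qed.

Lemma compXQ (R : comNzRingType) b Q :
  ('X^Q + 1 : {poly R}) ^+ b = (('X + 1) ^+ b) \Po 'X^Q.
Proof.
elim: b => [|b IH]; first by rewrite !expr0 comp_polyC.
by rewrite !exprS comp_polyM IH comp_polyD comp_polyX comp_polyC.
Qed.

Lemma lucas1 p e a b c d : prime p -> (a < p ^ e)%N -> (c < p ^ e)%N ->
  (('C(a + p ^ e * b, c + p ^ e * d))%:R : 'F_p) = ('C(a, c))%:R * ('C(b, d))%:R.
Proof.
move=> hp ha hc; set Q := (p ^ e)%N.
have Qpos : (0 < Q)%N by rewrite expn_gt0 prime_gt0.
have hch : p \in [pchar {poly 'F_p}] by rewrite pchar_poly pchar_Fp.
have hQ : [pchar {poly 'F_p}].-nat Q by rewrite pnatX (pnatE _ hp) hch ?orbT ?andbT.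
have E : ('X + 1 : {poly 'F_p}) ^+ (a + Q * b) = ('X + 1) ^+ a * (('X + 1) ^+ b \Po 'X^Q).
  by rewrite exprD exprM (exprDn_pchar _ _ hQ) expr1n compXQ.
rewrite -coefXD1n E coefM.
rewrite (bigD1 (Ordinal (leq_addr (Q*d) c : (c < (c + Q * d).+1)%N))) //=.
rewrite big1 ?addr0.
  by rewrite coefXD1n coef_comp_poly_Xn // addKn dvdn_mulr // mulKn // coefXD1n.
move=> i /eqP ne; rewrite coef_comp_poly_Xn //.
case: ifP => [dv|_]; last by rewrite mulr0.
have [ia|ia] := leqP i a; last by rewrite coefXD1n bin_small // mul0r.
exfalso; apply: ne; apply: val_inj => /=.
have iQ : (i < Q)%N by apply: leq_ltn_trans ha.
have ik : (i <= c + Q * d)%N by rewrite -ltnS ltn_ord.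
have HQ : ((c + Q * d) %% Q = c)%N by rewrite addnC mulnC modnMDl modn_small.
move: dv; rewrite -eqn_mod_dvd // (modn_small iQ) => /eqP E2.
by rewrite -E2 HQ.
Qed.
Lemma reidx (R : Type) (idx : R) (op : Monoid.com_law idx) (F : nat -> R) m n
  (f g : nat -> nat) : cancel f g -> cancel g f ->
  (forall k, (m <= k)%N -> F k = idx) -> (forall k, (k < m)%N -> (f k < n)%N) ->
  \big[op/idx]_(i < n) F (g i) = \big[op/idx]_(i < m) F i.
Proof.
move=> fg gf hF hf.
rewrite -(big_mkord xpredT (fun i => F (g i))) -(big_mkord xpredT F).
rewrite (bigID (fun i => g i < m)%N) /= [X in op _ X]big1 ?Monoid.mulm1; last first.
  by move=> i /negbTE; rewrite ltnNge => /negbFE /hF.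
rewrite -big_filter -(big_map g xpredT F).
apply: perm_big; apply: uniq_perm.
- by rewrite (map_inj_uniq (can_inj gf)) filter_uniq // iota_uniq.
- exact: iota_uniq.
move=> k; rewrite mem_iota /=; apply/mapP/idP.
  by case=> i; rewrite mem_filter => /andP [hi _] ->; rewrite subn0.
rewrite subn0 => hk; exists (f k); last by rewrite fg.
by rewrite mem_filter fg hk mem_index_iota /= hf.
Qed.

Definition tr (q : nat) (e : nat -> nat) (n : nat) : nat := \sum_(k < n) e k * q ^ k.

Lemma tr_lt q e n : (forall i, e i < q)%N -> (tr q e n < q ^ n)%N.
Proof.
move=> he; elim: n => [|n IH]; first by rewrite /tr big_ord0 expn0.
rewrite /tr big_ord_recr /= -/(tr q e n) expnSr.
have := he n; move: IH; set T := tr q e n; set Q := (q ^ n)%N; move=> h1 h2.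
apply: (@leq_trans (Q + e n * Q)); first by rewrite ltn_add2r.
by rewrite -mulSn mulnC leq_mul2l h2 orbT.
Qed.

Lemma lucasN p m0 (y e : nat -> nat) n : prime p ->
  (forall i, y i < p ^ m0)%N -> (forall i, e i < p ^ m0)%N ->
  (('C(tr (p ^ m0) y n, tr (p ^ m0) e n))%:R : 'F_p) = \prod_(i < n) ('C(y i, e i))%:R.
Proof.
move=> hp hy he; elim: n => [|n IH]; first by rewrite /tr !big_ord0 bin0.
rewrite big_ord_recr /= -IH /tr !big_ord_recr /= -!/(tr _ _ n).
rewrite -expnM ![(_ * p ^ _)%N]mulnC.
by rewrite lucas1 // expnM; apply: tr_lt.
Qed.

From Stdlib Require Import ClassicalEpsilon.
From mathcomp Require Import zify.

Lemma tr_digits q j n : (tr q (fun i => (j %/ q ^ i) %% q) n + q ^ n * (j %/ q ^ n) = j)%N.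
Proof.
elim: n => [|n IH]; first by rewrite /tr big_ord0 expn0 mul1n divn1.
rewrite /tr big_ord_recr /= -/(tr _ _ n).
rewrite [in X in (_ + X)%N](divn_eq (j %/ q ^ n) q) -divnMA -expnSr in IH.
rewrite -[RHS]IH expnSr.
set A := tr _ _ n; set B := (j %/ q ^ n %% q)%N; set C := (j %/ (q ^ n * q))%N.
rewrite mulnDr !mulnA [(q ^ n * C)%N]mulnC -addnA; congr (_ + _).
nia.
Qed.

Lemma key p q (y : Zpq q) j v : @eventual_binom p q y j v -> binomZp p y j = v.
Proof.
move=> Hv; rewrite /binomZp.
have := epsilon_spec (inhabits 0%R) _ (ex_intro _ v Hv).
case=> N1 h1; case: Hv => N h.
by rewrite -(h1 (maxn N N1)) ?leq_maxr // (h (maxn N N1)) ?leq_maxl.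
Qed.

Theorem proposition7p3 (p m0 : nat) (hp : prime p) (hm0 : (0 < m0)%N)
    (rho rho_inv : nat -> nat) (hrho1 : cancel rho rho_inv) (hrho2 : cancel rho_inv rho)
    (j : nat) (y : Zpq (p ^ m0)) :
  binomZp p (pushZp rho y) j = binomZp p y (push_nat (p ^ m0) rho j).
Proof.
set q := (p ^ m0)%N.
have q1 : (1 < q)%N.
  apply: (leq_trans (prime_gt1 hp)); rewrite -{1}(expn1 p); apply: leq_pexp2l => //.
  exact: prime_gt0.
have q0 : (0 < q)%N by apply: ltnW.
set dj := fun i => ((j %/ q ^ i) %% q)%N.
have hdj : forall i, (dj i < q)%N by move=> i; apply: ltn_pmod.
have jlt : forall n, (j < n)%N -> (j < q ^ n)%N.
  move=> n hn; apply: (leq_trans (ltn_expl j q1)); apply: leq_pexp2l => //; exact: ltnW.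
have dj0 : forall k, (j.+1 <= k)%N -> dj k = 0%N.
  by move=> k hk; rewrite /dj divn_small ?mod0n // jlt.
have jtr : forall n, (j < n)%N -> tr q dj n = j.
  move=> n hn; have := tr_digits q j n; rewrite divn_small ?jlt // muln0 addn0 => <-.
  by [].
have hy : forall i, (y i < q)%N by move=> i; apply: ltn_ord.
set H := fun k => (('C(y (rho k), dj k))%:R : 'F_p).
have H1 : forall k, (j.+1 <= k)%N -> H k = 1.
  by move=> k hk; rewrite /H dj0 // bin0.
set v0 := \prod_(k < j.+1) H k.
have E1 : @eventual_binom p q (pushZp rho y) j v0.
  exists j.+1 => n hn.
  have -> : trunc (pushZp rho y) n = tr q (fun i => nat_of_ord (y (rho i))) n by [].
  rewrite -{1}(jtr n hn) lucasN //; try (by move=> i; apply: hy); try (by move=> i; apply: hdj).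
  rewrite /v0 -(@reidx _ _ _ H j.+1 n id id) //.
  by move=> k hk; apply: leq_trans hn.
rewrite (@key p q _ _ v0 E1); apply: esym; apply: key.
set M := (\max_(k < j.+1) rho k)%N.
exists (maxn M.+1 j.+1) => n hn.
have hrn : forall k, (k < j.+1)%N -> (rho k < n)%N.
  move=> k hk; apply: (leq_trans _ (leq_trans (leq_maxl _ _) hn)); rewrite ltnS.
  by rewrite /M (bigD1 (Ordinal hk)) //= leq_maxl.
have -> : push_nat q rho j = tr q (fun i => dj (rho_inv i)) n.
  rewrite /push_nat /tr -(@reidx _ _ _ (fun k => dj k * q ^ rho k)%N j.+1 n rho rho_inv) //.
  - by apply: eq_bigr => i _; rewrite hrho2.
  - by move=> k hk; rewrite dj0.
have -> : trunc y n = tr q (fun i => nat_of_ord (y i)) n by [].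
rewrite lucasN //; try (by move=> i; apply: hy); try (by move=> i; apply: hdj).
rewrite /v0 -(@reidx _ _ _ H j.+1 n rho rho_inv) //.
by apply: eq_bigr => i _; rewrite /H hrho2.
Qed.
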